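(* Let $V$ be a vector space and $U_1,U_2,U_3\subset V$ subspaces. Put $U=U_1\times U_2\times U_3\subset X=V\times V\times V$ and $Y=\{(v,v,v):v\in V\}\subset X$. Then $X=U+Y$ if and only if $V=U_1+(U_2\cap U_3)=U_2+(U_3\cap U_1)=U_3+(U_1\cap U_2)$. *)

(* Defs.v *)
From HB Require Import structures.
From mathcomp Require Import all_boot all_algebra.
Set Implicit Arguments. Unset Strict Implicit. Unset Printing Implicit Defensive.
Import GRing.Theory.
Local Open Scope ring_scope.

Definition subspace (K : fieldType) (V : lmodType K) (U : V -> Prop) : Prop :=
  U 0 /\ (forall (a : K) (x y : V), U x -> U y -> U (a *: x + y)).

Definition sumsp (M : zmodType) (U W : M -> Prop) : M -> Prop :=
  fun x => exists u w, U u /\ W w /\ x = u + w.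

Definition capsp (M : Type) (U W : M -> Prop) : M -> Prop :=
  fun x => U x /\ W x.

Definition is_whole (M : Type) (U : M -> Prop) : Prop := forall x, U x.

Definition prodsp3 (M : Type) (U1 U2 U3 : M -> Prop) : M * M * M -> Prop :=
  fun x => U1 x.1.1 /\ U2 x.1.2 /\ U3 x.2.

Definition diag3 (M : Type) : M * M * M -> Prop :=
  fun x => exists v, x = (v, v, v).

(* Main.v *)
Require Import Defs.
From HB Require Import structures.
From mathcomp Require Import all_boot all_algebra.
Local Open Scope ring_scope.
Import GRing.Theory.

Section H.
Variables (K : fieldType) (V : lmodType K) (U : V -> Prop).
Hypothesis hU : subspace U.
Lemma sD x y : U x -> U y -> U (x + y).
Proof. move=> hx hy; have := hU.2 1 x y hx hy; by rewrite scale1r. Qed.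
Lemma sN x : U x -> U (- x).
Proof. move=> hx; have := hU.2 (-1) x 0 hx hU.1; by rewrite addr0 scaleN1r. Qed.
Lemma sB x y : U x -> U y -> U (x - y).
Proof. by move=> hx hy; apply: sD => //; apply: sN. Qed.
End H.

Theorem lemma6p2 (K : fieldType) (V : lmodType K) (U1 U2 U3 : V -> Prop)
  (hU1 : subspace U1) (hU2 : subspace U2) (hU3 : subspace U3) :
  is_whole (sumsp (prodsp3 U1 U2 U3) (@diag3 V)) <->
  (is_whole (sumsp U1 (capsp U2 U3)) /\
   is_whole (sumsp U2 (capsp U3 U1)) /\
   is_whole (sumsp U3 (capsp U1 U2))).
Proof.
split.
- move=> H; split; [|split].
  + move=> v; have [[[u1 u2] u3] [w [[h1 [h2 h3]] [[z ->] E]]]] := H (v, 0, 0).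
    case: E => e1 e2 e3 /=; simpl in h1, h2, h3.
    exists u1, z; split => //; split => //.
    have z2 : z = - u2 by apply: (addrI u2); rewrite -e2 subrr.
    have z3 : z = - u3 by apply: (addrI u3); rewrite -e3 subrr.
    by split; [rewrite z2; apply: sN|rewrite z3; apply: sN].
  + move=> v; have [[[u1 u2] u3] [w [[h1 [h2 h3]] [[z ->] E]]]] := H (0, v, 0).
    case: E => e1 e2 e3 /=; simpl in h1, h2, h3.
    exists u2, z; split => //; split => //.
    have z3 : z = - u3 by apply: (addrI u3); rewrite -e3 subrr.
    have z1 : z = - u1 by apply: (addrI u1); rewrite -e1 subrr.
    by split; [rewrite z3; apply: sN|rewrite z1; apply: sN].
  + move=> v; have [[[u1 u2] u3] [w [[h1 [h2 h3]] [[z ->] E]]]] := H (0, 0, v).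
    case: E => e1 e2 e3 /=; simpl in h1, h2, h3.
    exists u3, z; split => //; split => //.
    have z1 : z = - u1 by apply: (addrI u1); rewrite -e1 subrr.
    have z2 : z = - u2 by apply: (addrI u2); rewrite -e2 subrr.
    by split; [rewrite z1; apply: sN|rewrite z2; apply: sN].
- case=> H1 [H2 H3] [[x1 x2] x3].
  have [a1 [b1 [ha1 [[hb12 hb13] e1]]]] := H1 x1.
  have [a2 [b2 [ha2 [[hb23 hb21] e2]]]] := H2 x2.
  have [a3 [b3 [ha3 [[hb31 hb32] e3]]]] := H3 x3.
  pose w := b1 + b2 + b3.
  exists (x1 - w, x2 - w, x3 - w), (w, w, w); split; last first.
    split; first by exists w.
    by change ((x1,x2,x3) = ((x1-w)+w, (x2-w)+w, (x3-w)+w)); rewrite !subrK.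
  rewrite /prodsp3 /= /w e1 e2 e3; split; [|split].
  + have -> : a1 + b1 - (b1 + b2 + b3) = a1 - b2 - b3.
      by rewrite !opprD !addrA addrK.
    by apply: sB => //; apply: sB.
  + have -> : a2 + b2 - (b1 + b2 + b3) = a2 - b1 - b3.
      by rewrite !opprD !addrA [X in X - b3]addrAC addrK.
    by apply: sB => //; apply: sB.
  + have -> : a3 + b3 - (b1 + b2 + b3) = a3 - b1 - b2.
      by rewrite opprD addrA -[a3 + b3 - _ - _]addrA [_ - b3]addrC addrA addrK opprD addrA.
    by apply: sB => //; apply: sB.
Qed.
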